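(* For no natural number $k\ge 0$ is there a one-tape infinite time Turing machine with a $k$-cell scratch pad that computes the stretch function $s(a)=\langle a_0\,0\,0\,a_1\,0\,0\,a_2\,0\,0\cdots\rangle$ in such a way that on every input $a\in\mathbb{R}$ it halts within at most $\omega$ steps.
   Context: $\mathbb{R}=2^\omega$; $a_i$ is the $i$-th digit of $a$. A one-tape infinite time Turing machine with a $k$-cell scratch pad has a single tape with cells indexed by $\{-k,\dots,-1\}\cup\omega$ holding values in $\{0,1\}$, the cells $-k,\dots,-1$ forming the scratch pad (for $k=0$ this is an ordinary one-tape machine), one head, and a program with finitely many states including start, halt and a limit state. It operates as an ordinary Turing machine at successor stages (moving left from the leftmost cell leaves the head in place); at limit stages the head returns to the leftmost cell, the state becomes the limit state, and each cell takes the $\limsup$ of its earlier values. The input $a$ is written on cells $0,1,2,\dots$ with the pad initially $0$, and upon halting the output is the contents of cells $0,1,2,\dots$. *)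

(* Defs.v *)
From mathcomp Require Import all_boot.
Set Implicit Arguments. Unset Strict Implicit. Unset Printing Implicit Defensive.

(* Reals are elements of Cantor space 2^omega: a : nat -> bool, a_i = a i. *)
Definition real := nat -> bool.

Definition stretch (a : real) : real :=
  fun i => if i %% 3 == 0 then a (i %/ 3) else false.

(* A one-tape ITTM program: a finite set of states with designated start,
   halt and limit states (not required to be distinct), and a transition
   function: (state, symbol read) |-> (new state, symbol written, direction),
   direction true = right, false = left. *)
Record machine := Machine {
  mstate : finType;
  mstart : mstate;
  mhalt  : mstate;
  mlimit : mstate;
  mdelta : mstate -> bool -> mstate * bool * bool }.

(* Configurations.  With a k-cell scratch pad, the tape cell with index
   j in {-k,...,-1} U omega is stored at position p = j + k : nat, so
   position 0 is the leftmost cell. *)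
Record config (M : machine) := Config {
  cstate : mstate M;
  chead  : nat;
  ctape  : nat -> bool }.

(* One successor step.  The halt state is absorbing (the machine has
   stopped).  Moving left from position 0 leaves the head in place
   (truncated predecessor). *)
Definition step (M : machine) (c : config M) : config M :=
  if cstate c == mhalt M then c else
  let: (q', w, d) := mdelta (cstate c) (ctape c (chead c)) in
  Config q' (if d then (chead c).+1 else (chead c).-1)
         (fun p => if p == chead c then w else ctape c p).

Definition init (M : machine) (k : nat) (a : real) : config M :=
  Config (mstart M) 0 (fun p => if p < k then false else a (p - k)).

Definition run (M : machine) (k : nat) (a : real) (n : nat) : config M :=
  iter n (@step M) (init M k a).

(* The content of position p at stage omega: limsup of earlier values,
   i.e. it is 1 iff the cell held 1 at cofinally many stages. *)
Definition cell_at_omega (M : machine) (k : nat) (a : real) (p : nat) : Prop :=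
  forall N, exists n, N <= n /\ ctape (run M k a n) p = true.

(* Either the halt state is reached at a
   finite stage n, or it is never reached at a finite stage and the
   configuration at stage omega (state = limit state, tape = limsup) is
   in the halt state. *)
Definition halts_within_omega_with_output (M : machine) (k : nat) (a b : real)
  : Prop :=
  (exists n, cstate (run M k a n) = mhalt M /\
             forall i, ctape (run M k a n) (k + i) = b i)
  \/ ((forall n, cstate (run M k a n) <> mhalt M) /\ mlimit M = mhalt M /\
      forall i, cell_at_omega M k a (k + i) <-> b i = true).

(* Main.v *)
Require Import Defs.
From mathcomp Require Import all_boot zify.
From Stdlib Require Import Classical ClassicalEpsilon FunctionalExtensionality.
Set Implicit Arguments. Unset Strict Implicit. Unset Printing Implicit Defensive.

Definition bP (P : Prop) : bool :=
  if excluded_middle_informative P then true else false.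
Lemma bPE (P : Prop) : bP P = true <-> P.
Proof. rewrite /bP; case: excluded_middle_informative => //. Qed.
Lemma bPN (P : Prop) : bP P = false <-> ~ P.
Proof. rewrite /bP; case: excluded_middle_informative => //. Qed.

Fixpoint strs (n : nat) : seq (seq bool) :=
  if n is n'.+1 then flatten [seq [:: rcons s false; rcons s true] | s <- strs n']
  else [:: [::]].

Lemma count_fl (P : pred (seq bool)) (l : seq (seq bool)) :
  count P (flatten [seq [:: rcons s false; rcons s true] | s <- l]) =
  count (fun s => P (rcons s false)) l + count (fun s => P (rcons s true)) l.
Proof.
elim: l => //= x l ->.
case: (P (rcons x false)); case: (P (rcons x true)) => /=; lia.
Qed.

Lemma size_strs n : size (strs n) = 2 ^ n.
Proof.
elim: n => //= n IH. rewrite -count_predT count_fl !count_predT IH expnS; lia.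
Qed.

Lemma mem_strs n s : (s \in strs n) = (size s == n).
Proof.
elim: n s => [|n IH] s /=.
  by rewrite inE; case: s.
apply/flatten_mapP/idP.
  by move=> [x]; rewrite IH => /eqP <-; rewrite mem_seq2 => /orP [] /eqP ->; rewrite size_rcons.
case/lastP: s => [//|s b]; rewrite size_rcons eqSS => Hs.
exists s; first by rewrite IH.
by rewrite mem_seq2; case: b; rewrite eqxx ?orbT.
Qed.

Lemma uniq_strs n : uniq (strs n).
Proof.
elim: n => //= n.
elim: (strs n) => //= x l IH /andP [Hx Hl].
rewrite IH // andbT !inE negb_or.
have NF: forall b, rcons x b \notin flatten [seq [:: rcons s false; rcons s true] | s <- l].
  move=> b; apply/negP => /flatten_mapP [z Hz].
  by rewrite !inE => /orP [] /eqP H; case: (rcons_inj H) => Hxz _; subst z; rewrite Hz in Hx.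
rewrite !NF andbT /=.
rewrite andbT; apply/negP => /eqP H; by case: (rcons_inj H).
Qed.

Lemma count_take (P : pred (seq bool)) n d :
  count (fun v => P (take n v)) (strs (n + d)) = 2 ^ d * count P (strs n).
Proof.
elim: d => [|d IH].
  rewrite addn0 mul1n; apply: eq_in_count => v; rewrite mem_strs => /eqP <-.
  by rewrite take_size.
rewrite addnS /= count_fl.
have E: forall b, count (fun s => P (take n (rcons s b))) (strs (n + d)) =
                  count (fun v => P (take n v)) (strs (n + d)).
  move=> b; apply: eq_in_count => v; rewrite mem_strs => /eqP Hv.
  by rewrite -cats1 takel_cat // Hv leq_addr.
by rewrite !E IH expnS; lia.
Qed.

Definition ext (u : seq bool) (a : nat -> bool) : Prop :=
  forall i, i < size u -> a i = nth false u i.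

Definition bad (Gd : nat -> (nat -> bool) -> Prop) (p : nat) (u : seq bool) : bool :=
  bP (forall a, ext u a -> ~ Gd p a).

Lemma ext_take u n a : ext u a -> ext (take n u) a.
Proof.
move=> H i; rewrite size_take_min leq_min => /andP [Hi Hi']; rewrite nth_take //; exact: H.
Qed.

Lemma bad_take Gd p n v : bad Gd p (take n v) -> bad Gd p v.
Proof.
move/bPE => H; apply/bPE => a Ha; apply: H; exact: ext_take.
Qed.

Lemma bad_mono (Gd : nat -> (nat -> bool) -> Prop) p p' v :
  (forall p p' a, p <= p' -> Gd p a -> Gd p' a) ->
  p <= p' -> bad Gd p' v -> bad Gd p v.
Proof.
move=> Hm Hp /bPE H; apply/bPE => a Ha Hg; apply: (H a Ha); exact: Hm Hg.
Qed.

Lemma count_split (T : Type) (a b : pred T) s :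
  count a s = count (fun x => a x && b x) s + count (fun x => a x && ~~ b x) s.
Proof. elim: s => //= x s ->; case: (a x); case: (b x) => /=; lia. Qed.

Lemma count_or (T : Type) (a b : pred T) s :
  count (fun x => a x || b x) s <= count a s + count b s.
Proof. elim: s => //= x s; case: (a x); case: (b x) => /=; lia. Qed.

Lemma cauchy (f : nat -> nat) D L0 : 0 < D -> (forall n, f n <= 2 ^ n) ->
  (forall n d, 2 ^ d * f n <= f (n + d)) ->
  exists n0, L0 <= n0 /\ forall d, (f (n0 + d) - 2 ^ d * f n0) * D <= 2 ^ (n0 + d).
Proof.
move=> HD Hf Hm.
apply: NNPP => Hc.
have H: forall n0, L0 <= n0 -> exists d, 2 ^ (n0 + d) < (f (n0 + d) - 2 ^ d * f n0) * D.
  move=> n0 Hn0; apply: NNPP => Hn; apply: Hc; exists n0; split => // d.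
  by rewrite leqNgt; apply/negP => Hd; apply: Hn; exists d.
have J: forall j, exists n, L0 <= n /\ j * 2 ^ n <= f n * D.
  elim=> [|j [n [Hn Hj]]]; first by exists L0.
  have [d Hd] := H n Hn.
  exists (n + d); split; first by rewrite (leq_trans Hn) ?leq_addr.
  have Hmm := Hm n d.
  move: Hd Hmm Hj; rewrite expnD.
  set X := 2 ^ n; set Y := 2 ^ d; set F := f (n + d); set G := f n.
  move=> Hd Hmm Hj.
  have E: F * D = (F - Y * G) * D + Y * G * D by rewrite -mulnDl subnK.
  rewrite E mulSn.
  have : Y * (j * X) <= Y * (G * D) by rewrite leq_mul2l Hj orbT.
  nia.
have [n [_ Hn]] := J D.+1.
have := Hf n; move: Hn; set X := 2 ^ n; nia.
Qed.

Fixpoint NNf (ns : nat -> nat) (P : nat) : nat :=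
  if P is P'.+1 then maxn (NNf ns P') (ns P) else ns 0.

Fixpoint Bdf (Gd : nat -> (nat -> bool) -> Prop) (ns : nat -> nat) (P : nat) (v : seq bool) : bool :=
  if P is P'.+1 then Bdf Gd ns P' v && bad Gd P (take (ns P) v)
  else bad Gd 0 (take (ns 0) v).

Lemma NN_ge ns p P : p <= P -> ns p <= NNf ns P.
Proof.
elim: P => [|P IH]; first by rewrite leqn0 => /eqP ->.
rewrite leq_eqVlt => /orP [/eqP ->|Hp] /=; first by rewrite leq_maxr.
by rewrite (leq_trans (IH Hp)) ?leq_maxl.
Qed.

Lemma NN_mono ns P P' : P <= P' -> NNf ns P <= NNf ns P'.
Proof.
elim: P' => [|P' IH]; first by rewrite leqn0 => /eqP ->.
rewrite leq_eqVlt => /orP [/eqP ->|Hp] //=.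
by rewrite (leq_trans (IH Hp)) ?leq_maxl.
Qed.

Lemma Bd_le Gd ns P v p : Bdf Gd ns P v -> p <= P -> bad Gd p (take (ns p) v).
Proof.
elim: P => [|P IH] /=; first by move=> H; rewrite leqn0 => /eqP ->.
move=> /andP [H1 H2]; rewrite leq_eqVlt => /orP [/eqP ->|Hp] //.
exact: IH.
Qed.

Lemma Bd_mono Gd ns P P' v : Bdf Gd ns P' v -> P <= P' -> Bdf Gd ns P v.
Proof.
elim: P' => [|P' IH] /=; first by move=> H; rewrite leqn0 => /eqP ->.
move=> /andP [H1 H2]; rewrite leq_eqVlt => /orP [/eqP ->|Hp] /=.
  by rewrite H1 H2.
exact: IH.
Qed.

Lemma abstract_contra (Gd : nat -> (nat -> bool) -> Prop) (L : nat -> nat) :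
  (forall a, exists p, Gd p a) ->
  (forall p p' a, p <= p' -> Gd p a -> Gd p' a) ->
  (forall p n, L p <= n -> 4 * count (fun u => ~~ bad Gd p u) (strs n) <= 2 ^ n) ->
  False.
Proof.
move=> H1 Hm H4.
pose f p n := count (bad Gd p) (strs n).
have fle: forall p n, f p n <= 2 ^ n.
  by move=> p n; rewrite -(size_strs n) count_size.
have fmono: forall p n d, 2 ^ d * f p n <= f p (n + d).
  move=> p n d; rewrite /f -count_take; apply: sub_count => v; exact: bad_take.
have HC: forall p, exists n0, L p + p <= n0 /\ forall d,
    (f p (n0 + d) - 2 ^ d * f p n0) * 2 ^ (p + 3) <= 2 ^ (n0 + d).
  move=> p; apply: cauchy; [by rewrite expn_gt0|exact: (fle p)|exact: (fmono p)].
pose ns := fun p => proj1_sig (constructive_indefinite_description _ (HC p)).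
have Hns : forall p, L p + p <= ns p /\ forall d,
    (f p (ns p + d) - 2 ^ d * f p (ns p)) * 2 ^ (p + 3) <= 2 ^ (ns p + d).
  move=> p; exact: (proj2_sig (constructive_indefinite_description _ (HC p))).
pose NN := NNf ns.
pose Bd := Bdf Gd ns.
pose e p N := count (fun v => bad Gd p v && ~~ bad Gd p (take (ns p) v)) (strs N).
have He: forall p N, ns p <= N -> e p N * 2 ^ (p + 3) <= 2 ^ N.
  move=> p N HN.
  have [_ Hd] := Hns p.
  have := Hd (N - ns p); rewrite subnKC //.
  have -> : f p N = count (fun v => bad Gd p v && bad Gd p (take (ns p) v)) (strs N) + e p N.
    by rewrite /f (count_split _ (fun v => bad Gd p (take (ns p) v))).
  have -> : count (fun v => bad Gd p v && bad Gd p (take (ns p) v)) (strs N) =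
            2 ^ (N - ns p) * f p (ns p).
    rewrite /f -count_take subnKC //; apply: eq_count => v.
    by case E: (bad Gd p (take (ns p) v)); rewrite ?andbT ?andbF // (bad_take E).
  by rewrite addKn.
pose ES := fix ES P N := if P is P'.+1 then ES P' N + e P N else e 0 N.
have HU: forall P P' N, P <= P' ->
    count (fun v => bad Gd P' v && ~~ Bd P v) (strs N) <= ES P N.
  elim=> [|P IH] P' N HP /=.
    apply: sub_count => v /andP [Hb Hn]; rewrite Hn andbT.
    exact: (bad_mono Hm _ Hb).
  apply: leq_trans (leq_add (IH P' N (ltnW HP)) (leqnn (e P.+1 N))).
  apply: leq_trans (count_or _ _ _); apply: sub_count => v /andP [Hb].
  rewrite negb_and => /orP [Hn|Hn]; first by rewrite Hb Hn.
  by rewrite Hn (bad_mono Hm HP Hb) orbT.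
have HES: forall P N, (forall p, p <= P -> ns p <= N) ->
    ES P N * 2 ^ (P + 3) + 2 ^ N <= 2 ^ N * 2 ^ P.+1.
  elim=> [|P IH] N HN /=.
    have := He 0 N (HN 0 (leqnn 0)); rewrite expn1; lia.
  have := IH N (fun p Hp => HN p (leqW Hp)).
  have := He P.+1 N (HN P.+1 (leqnn _)).
  rewrite !addSn !expnS; set X := 2 ^ N; set Y := 2 ^ (P + 3); set Z := 2 ^ P; lia.
have Claim1: forall P, exists v, size v = NN P /\ Bd P v.
  move=> P; set N := NN P.
  have HNp: forall p, p <= P -> ns p <= N by move=> p Hp; exact: NN_ge.
  have HLN: L P <= N.
    apply: leq_trans (HNp P (leqnn P)); have [H _] := Hns P; exact: leq_trans (leq_addr _ _) H.
  have A1 := H4 P N HLN.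
  have A2 := count_predC (bad Gd P) (strs N); rewrite size_strs in A2.
  have A3 := count_split (bad Gd P) (Bd P) (strs N).
  have A4 := HU P P N (leqnn P).
  have A5 : count (fun v => bad Gd P v && Bd P v) (strs N) <= count (Bd P) (strs N).
    by apply: sub_count => v /andP [].
  have A6 := HES P N HNp.
  have Hpos: 0 < count (Bd P) (strs N).
    move: A1 A2 A3 A4 A5 A6.
    have ->: count (predC (bad Gd P)) (strs N) = count (fun u => ~~ bad Gd P u) (strs N) by [].
    rewrite !expnS !expnD; set X := 2 ^ N; set Z := 2 ^ P.
    have: 0 < Z by rewrite expn_gt0.
    nia.
  have /hasP [v Hv HB] : has (Bd P) (strs N) by rewrite has_count.
  by exists v; move: Hv; rewrite mem_strs => /eqP.
pose Ext w := forall P, exists v, NN P <= size v /\ Bd P v /\ take (size w) v = w.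
have Ext0: Ext [::].
  move=> P; have [v [Hv HB]] := Claim1 P; exists v; split; [by rewrite Hv|split => //; exact: take0].
have NNP: forall P, P <= NN P.
  move=> P; apply: leq_trans (NN_ge ns (leqnn P)); have [H _] := Hns P.
  exact: leq_trans (leq_addl _ _) H.
have Estep: forall w, Ext w -> exists b, Ext (rcons w b).
  move=> w Hw; apply: NNPP => Hn.
  have Hb: forall b, exists P, ~ exists v, NN P <= size v /\ Bd P v /\ take (size (rcons w b)) v = rcons w b.
    move=> b; apply: NNPP => Hb; apply: Hn; exists b => P.
    by apply: NNPP => HP; apply: Hb; exists P.
  have [P0 HP0] := Hb false; have [P1 HP1] := Hb true.
  have [v [Hv1 [Hv2 Hv3]]] := Hw (maxn (maxn P0 P1) (size w).+1).
  have Hsz: size w < size v.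
    apply: leq_trans Hv1; apply: leq_trans (NNP _); by rewrite leq_maxr.
  set b := nth false v (size w).
  have Hr: take (size (rcons w b)) v = rcons w b by rewrite size_rcons (take_nth false Hsz) Hv3.
  case Eb: b Hr => Hr.
    apply: HP1; exists v; split; last split => //.
      apply: leq_trans Hv1; apply: NN_mono; by rewrite leq_max leq_maxr.
    apply: (Bd_mono Hv2); by rewrite leq_max leq_maxr.
  apply: HP0; exists v; split; last split => //.
    apply: leq_trans Hv1; apply: NN_mono; by rewrite leq_max leq_maxl.
  apply: (Bd_mono Hv2); by rewrite leq_max leq_maxl.
pose next w := if bP (Ext (rcons w true)) then rcons w true else rcons w false.
have Hnext: forall w, Ext w -> Ext (next w).
  move=> w Hw; rewrite /next; case E: (bP _); first by move/bPE: E.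
  move/bPN: E => E; have [[|] Hb] := Estep w Hw => //.
pose ws i := iter i next [::].
have Hws: forall i, Ext (ws i) by elim=> //= i IH; exact: Hnext.
have Hsz: forall i, size (ws i) = i.
  elim=> //= i IH; rewrite /next; case: (bP _); by rewrite size_rcons IH.
have Htk: forall i j, i <= j -> take i (ws j) = ws i.
  move=> i; elim=> [|j IH]; first by rewrite leqn0 => /eqP ->.
  rewrite leq_eqVlt => /orP [/eqP ->|Hij]; first by rewrite -{1}(Hsz j.+1) take_size.
  have ->: ws j.+1 = ws j ++ [:: nth false (ws j.+1) j].
    rewrite /= /next; case: (bP _); by rewrite -cats1 nth_cat Hsz ltnn subnn.
  by rewrite takel_cat ?Hsz // IH.
pose a i := nth false (ws i.+1) i.
have Hext: forall n, ext (ws n) a.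
  move=> n i; rewrite Hsz => Hi; rewrite /a -(Htk i.+1 n Hi) nth_take //.
have [p Hp] := H1 a.
have [v [_ [HB Hv]]] := Hws (ns p) p.
have := Bd_le HB (leqnn p); rewrite -{1}(Hsz (ns p)) Hv => /bPE H.
exact: (H a (Hext _) Hp).
Qed.


Lemma runS M k a n : run M k a n.+1 = step (run M k a n).
Proof. by rewrite /run iterS. Qed.

Lemma step_head M (c : config M) : chead (step c) <= (chead c).+1.
Proof.
rewrite /step; case: eqP => _ //; case: (mdelta _ _) => [[q w] d] /=.
by case: d => /=; lia.
Qed.

Lemma step_tape M (c : config M) p : p != chead c -> ctape (step c) p = ctape c p.
Proof.
move=> Hp; rewrite /step; case: (cstate c == mhalt M) => //.
case: (mdelta _ _) => [[q w] d] /=; by rewrite (negbTE Hp).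
Qed.

Lemma step_halt M (c : config M) : cstate c = mhalt M -> step c = c.
Proof. by rewrite /step => ->; rewrite eqxx. Qed.

Lemma step_congr M (c c' : config M) P :
  cstate c = cstate c' -> chead c = chead c' -> chead c < P ->
  (forall p, p < P -> ctape c p = ctape c' p) ->
  [/\ cstate (step c) = cstate (step c'), chead (step c) = chead (step c') &
      forall p, p < P -> ctape (step c) p = ctape (step c') p].
Proof.
case: c => q h t; case: c' => q' h' t' /= <- <- Hh Ht.
rewrite /step /=; case: eqP => _ //=.
rewrite (Ht h Hh); case: (mdelta _ _) => [[q1 w] d] /=; split => // p Hp.
by rewrite Ht.
Qed.

Lemma head_le M k a n : chead (run M k a n) <= n.
Proof.
elim: n => [//|n IH]; rewrite runS; exact: leq_trans (step_head _) _.
Qed.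

Lemma loc1 M k a n P : (forall i, i < n -> chead (run M k a i) < P) ->
  forall p, P <= p -> ctape (run M k a n) p = ctape (run M k a 0) p.
Proof.
elim: n => [//|n IH] H p Hp; rewrite runS step_tape.
  apply: IH => // i Hi; apply: H; exact: ltnW.
apply/eqP => E; have := H n (ltnSn n); rewrite -E ltnNge Hp //.
Qed.

Lemma loc2 M k a b n P :
  (forall p, p < P -> ctape (run M k a 0) p = ctape (run M k b 0) p) ->
  (forall i, i < n -> chead (run M k a i) < P) ->
  [/\ cstate (run M k a n) = cstate (run M k b n),
      chead (run M k a n) = chead (run M k b n) &
      forall p, p < P -> ctape (run M k a n) p = ctape (run M k b n) p].
Proof.
move=> H0; elim: n => [|n IH] H; first by split.
have [H1 H2 H3] := IH (fun i Hi => H i (ltnW Hi)).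
rewrite !runS; apply: step_congr => //; exact: H.
Qed.

Lemma halt_abs M k a n : cstate (run M k a n) = mhalt M ->
  forall d, run M k a (d + n) = run M k a n.
Proof.
move=> H; elim=> [//|d IH]; by rewrite addSn runS IH step_halt.
Qed.

Lemma stretch0 a j : stretch a (3 * j) = a j.
Proof.
rewrite /stretch; have -> : (3 * j) %% 3 = 0 by lia.
by have -> : (3 * j) %/ 3 = j by lia.
Qed.

Lemma stretch1 a j : stretch a (3 * j + 1) = false.
Proof. rewrite /stretch; have -> : (3 * j + 1) %% 3 = 1 by lia. by []. Qed.

Lemma cell_shift M k a a' t t' x :
  (forall i, run M k a (t + i) = run M k a' (t' + i)) ->
  cell_at_omega M k a x -> cell_at_omega M k a' x.
Proof.
move=> Hs H N; have [n [Hn Ht]] := H (t + N).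
exists (t' + (n - t)); split; first lia.
by rewrite -Hs subnKC // (leq_trans (leq_addr N t) Hn).
Qed.

Lemma out_det M k a a' t t' b b' :
  (forall i, run M k a (t + i) = run M k a' (t' + i)) ->
  halts_within_omega_with_output M k a b ->
  halts_within_omega_with_output M k a' b' -> forall j, b j = b' j.
Proof.
move=> Hs [[n [Hn Ho]] | [Hn [Hl Ho]]] [[n' [Hn' Ho']] | [Hn' [Hl' Ho']]] j.
- have E1: run M k a (t + (n + n')) = run M k a n.
    rewrite -(halt_abs Hn (t + n')); congr run; lia.
  have E2: run M k a' (t' + (n + n')) = run M k a' n'.
    rewrite -(halt_abs Hn' (t' + n)); congr run; lia.
  by rewrite -Ho -Ho' -E1 -E2 Hs.
- exfalso; apply: (Hn' (t' + n)); rewrite -Hs (halt_abs Hn t) //.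
- exfalso; apply: (Hn (t + n')); rewrite Hs (halt_abs Hn' t') //.
- have Hs' : forall i, run M k a' (t' + i) = run M k a (t + i) by move=> i; rewrite Hs.
  case Eb: (b j); case Eb': (b' j) => //.
    have := proj1 (Ho' j) (cell_shift Hs (proj2 (Ho j) Eb)); by rewrite Eb'.
  have := proj1 (Ho j) (cell_shift Hs' (proj2 (Ho' j) Eb')); by rewrite Eb.
Qed.

Definition halts_all M k := forall a, halts_within_omega_with_output M k a (stretch a).

Lemma run0 M k a p : ctape (run M k a 0) p = if p < k then false else a (p - k).
Proof. by []. Qed.

Lemma reach M k (Hall : halts_all M k) a P : exists n, P <= chead (run M k a n).
Proof.
apply: NNPP => Hn.
have Hlt: forall n, chead (run M k a n) < P.
  move=> n; rewrite ltnNge; apply/negP => H; apply: Hn; by exists n.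
pose j := 3 * P + 1.
pose a' := fun i => if i == j then true else a i.
have Hag: forall p, p < P -> ctape (run M k a 0) p = ctape (run M k a' 0) p.
  move=> p Hp; rewrite !run0; case: (p < k) => //; rewrite /a'.
  have -> : (p - k == j) = false by apply/eqP; rewrite /j; lia.
  by [].
have Hlt': forall n, chead (run M k a' n) < P.
  move=> n; have [_ E _] := @loc2 M k a a' n P Hag (fun i _ => Hlt i); rewrite -E; exact: Hlt.
have Htape: forall n, ctape (run M k a' n) (k + j) = true.
  move=> n; rewrite (@loc1 _ _ _ _ P) //; first by rewrite run0 ltnNge leq_addr /= addKn /a' eqxx.
  rewrite /j; lia.
have := stretch1 a' P; rewrite -/j => Hs.
case: (Hall a') => [[n [_ Ho]] | [_ [_ Ho]]].
  by have := Ho j; rewrite Htape Hs.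
have := proj1 (Ho j) (fun N => ex_intro _ N (conj (leqnn N) (Htape N))).
by rewrite Hs.
Qed.

Definition Tp M k a P : nat :=
  match excluded_middle_informative (exists n, P <= chead (run M k a n)) with
  | left H => ex_minn H
  | right _ => 0 end.

Lemma TpP M k a P : (exists n, P <= chead (run M k a n)) ->
  P <= chead (run M k a (Tp M k a P)) /\
  forall i, P <= chead (run M k a i) -> Tp M k a P <= i.
Proof.
move=> Hex; rewrite /Tp; case: excluded_middle_informative => // H.
by case: ex_minnP => m Hm Hmin.
Qed.

Lemma Tp_lt M k (Hall : halts_all M k) a P i :
  i < Tp M k a P -> chead (run M k a i) < P.
Proof.
have [_ H] := TpP (reach Hall a P).
move=> Hi; rewrite ltnNge; apply/negP => Hc; have := H i Hc; by rewrite leqNgt Hi.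
Qed.

Lemma Tp_head M k (Hall : halts_all M k) a P : chead (run M k a (Tp M k a P)) = P.
Proof.
have [H _] := TpP (reach Hall a P).
apply/eqP; rewrite eqn_leq H andbT.
case E: (Tp M k a P) H => [|n] H.
  by have := head_le M k a 0.
have := Tp_lt Hall (i := n) (P := P) (a := a); rewrite E ltnSn => /(_ isT) Hn.
rewrite runS; exact: leq_trans (step_head _) Hn.
Qed.

Lemma Tp_ge M k (Hall : halts_all M k) a P : P <= Tp M k a P.
Proof. rewrite -{1}(Tp_head Hall a P); exact: head_le. Qed.

Lemma Tp_mono M k (Hall : halts_all M k) a P P' : P <= P' -> Tp M k a P <= Tp M k a P'.
Proof.
move=> HP; have [_ H] := TpP (reach Hall a P); apply: H; by rewrite Tp_head.
Qed.

Lemma Tp_agree1 M k (Hall : halts_all M k) a b P :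
  (forall p, p < P -> ctape (run M k a 0) p = ctape (run M k b 0) p) ->
  Tp M k b P <= Tp M k a P.
Proof.
move=> Hag; have [_ H] := TpP (reach Hall b P); apply: H.
have [_ <- _] := loc2 Hag (fun i Hi => Tp_lt Hall Hi).
by rewrite Tp_head.
Qed.

Lemma Tp_agree M k (Hall : halts_all M k) a b P :
  (forall p, p < P -> ctape (run M k a 0) p = ctape (run M k b 0) p) ->
  Tp M k b P = Tp M k a P.
Proof.
move=> Hag; apply/eqP; rewrite eqn_leq !Tp_agree1 //.
by move=> p Hp; rewrite Hag.
Qed.

Lemma config_ext M (c c' : config M) :
  cstate c = cstate c' -> chead c = chead c' -> (forall x, ctape c x = ctape c' x) -> c = c'.
Proof.
case: c => q h t; case: c' => q' h' t' /= -> -> H.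
by rewrite (functional_extensionality _ _ H).
Qed.

Lemma evzero M k (Hall : halts_all M k) a j :
  exists N, forall t, N <= t -> ctape (run M k a t) (k + (3 * j + 1)) = false.
Proof.
case: (Hall a) => [[n [Hn Ho]] | [_ [_ Ho]]].
  exists n => t Ht; rewrite -(subnK Ht) halt_abs // Ho stretch1 //.
have Hc: ~ cell_at_omega M k a (k + (3 * j + 1)).
  by move/(proj1 (Ho _)); rewrite stretch1.
apply: NNPP => Hn; apply: Hc => N; apply: NNPP => H; apply: Hn; exists N => t Ht.
apply/negP => /negPn Hb; apply: H; exists t; split => //; by case: (ctape _ _) Hb.
Qed.

Lemma evzero_all M k (Hall : halts_all M k) a m :
  exists N, forall t, N <= t -> forall j, j < m -> ctape (run M k a t) (k + 3 * j + 1) = false.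
Proof.
elim: m => [|m [N HN]]; first by exists 0.
have [N' HN'] := evzero Hall a m.
exists (maxn N N') => t Ht j; rewrite ltnS leq_eqVlt => /orP [/eqP ->|Hj].
  rewrite -addnA; apply: HN'; exact: leq_trans (leq_maxr _ _) Ht.
apply: HN => //; exact: leq_trans (leq_maxl _ _) Ht.
Qed.

Theorem mainTheorem20 :
  forall (k : nat) (M : machine),
    ~ (forall a : real, halts_within_omega_with_output M k a (stretch a)).
Proof.
move=> k M Hall0; have Hall : halts_all M k := Hall0.
pose Q := mstate M.
pose m := 4 * #|Q| * 2 ^ k.
have Hm : 4 * #|Q| * 2 ^ k <= 2 ^ m by apply: ltnW; apply: ltn_expl.
pose Pp p := p + k + 3 * m + 1.
pose Lp p := p + 3 * m + 1.
pose good p (a : real) := forall t, Tp M k a (Pp p) <= t ->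
  forall j, j < m -> ctape (run M k a t) (k + 3 * j + 1) = false.
apply: (@abstract_contra good Lp).
- move=> a; have [N HN] := evzero_all Hall a m; exists N => t Ht; apply: HN.
  apply: leq_trans Ht; apply: leq_trans (Tp_ge Hall a _); rewrite /Pp; lia.
- move=> p p' a Hp H t Ht; apply: H; apply: leq_trans Ht; apply: Tp_mono => //.
  rewrite /Pp; lia.
move=> p n Hn.
pose P := Pp p. pose L := Lp p.
pose a0 (u : seq bool) : real := fun i => nth false u i.
pose T u := Tp M k (a0 u) P.
pose Zs := [seq k + 3 * j + 1 | j <- iota 0 m].
pose Fr := [seq i <- iota 0 P | i \notin Zs].
pose psi u := (cstate (run M k (a0 u) (T u)),
               [seq ctape (run M k (a0 u) (T u)) i | i <- Fr] ++ drop L u).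
pose G := [seq u <- strs n | ~~ bad good p u].
have HZ : forall x, x \in Zs -> x < P.
  move=> x /mapP [j]; rewrite mem_iota => /andP [_ Hj] ->; rewrite /P /Pp; lia.
have HsizeFr : size Fr = P - m.
  have E1 := count_predC (fun i => i \in Zs) (iota 0 P).
  have E2 : count (fun i => i \in Zs) (iota 0 P) = m.
    rewrite -size_filter.
    have : perm_eq [seq i <- iota 0 P | i \in Zs] Zs.
      apply: uniq_perm; first by rewrite filter_uniq // iota_uniq.
        rewrite map_inj_uniq ?iota_uniq // => x y; lia.
      move=> x; rewrite mem_filter; apply/andP/idP => [[]//|Hx]; split => //.
      by rewrite mem_iota add0n HZ.
    by move/perm_size => ->; rewrite size_map size_iota.
  rewrite /Fr size_filter; rewrite size_iota in E1.
  have E3 : count (fun i => i \notin Zs) (iota 0 P) = count (predC (fun i => i \in Zs)) (iota 0 P) by [].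
  rewrite E3; lia.
have Hgood : forall u, u \in G -> exists b, ext u b /\ good p b.
  move=> u; rewrite mem_filter => /andP [Hb _]; apply: NNPP => Hn'.
  move: Hb; rewrite /bad; suff -> : bP (forall a, ext u a -> ~ good p a) = true by [].
  apply/bPE => b Hb Hg; apply: Hn'; by exists b.
have HszG : forall u, u \in G -> size u = n.
  by move=> u; rewrite mem_filter mem_strs => /andP [_ /eqP].
have Hzero : forall u, u \in G -> forall j, j < m ->
    ctape (run M k (a0 u) (T u)) (k + 3 * j + 1) = false.
  move=> u Hu j Hj; have [b [Hb Hg]] := Hgood u Hu.
  have Hag : forall x, x < P -> ctape (run M k b 0) x = ctape (run M k (a0 u) 0) x.
    move=> x Hx; rewrite !run0; case: ifP => // Hk; rewrite Hb // (HszG u Hu).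
    move/negbT: Hk; rewrite /P /Pp in Hx; rewrite /Lp in Hn; lia.
  have ET : T u = Tp M k b P := Tp_agree Hall Hag.
  have [_ _ Ht] := @loc2 M k b (a0 u) (T u) P Hag
    (fun i Hi => Tp_lt Hall (a := b) (P := P) (i := i) (eq_ind _ (fun z => i < z) Hi _ ET)).
  rewrite -Ht; first by apply: (Hg (T u)) => //; rewrite ET.
  rewrite /P /Pp; lia.
have Hinj : {in G &, injective psi}.
  move=> u u' Hu Hu' E; case: E => Es /eqP Ec.
  move: Ec; rewrite eqseq_cat ?size_map // => /andP [/eqP Emap /eqP Edrop].
  have Hhd : chead (run M k (a0 u) (T u)) = chead (run M k (a0 u') (T u')).
    by rewrite !Tp_head.
  have Htp : forall x, ctape (run M k (a0 u) (T u)) x = ctape (run M k (a0 u') (T u')) x.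
    move=> x; case: (ltnP x P) => Hx.
      case: (boolP (x \in Zs)) => HxZ.
        move: HxZ => /mapP [j]; rewrite mem_iota add0n => /andP [_ Hj] ->.
        by rewrite !Hzero.
      have HxF : x \in Fr by rewrite mem_filter HxZ mem_iota Hx.
      by move/eq_in_map: Emap => /(_ x HxF).
    rewrite (@loc1 _ _ _ (T u) P (fun i Hi => Tp_lt Hall Hi) x Hx).
    rewrite (@loc1 _ _ _ (T u') P (fun i Hi => Tp_lt Hall Hi) x Hx) !run0.
    have -> : (x < k) = false by apply/negbTE; rewrite -leqNgt; rewrite /P /Pp in Hx; lia.
    have HL : L <= x - k by rewrite /L /Lp; rewrite /P /Pp in Hx; lia.
    by rewrite /a0 -(subnKC HL) -!nth_drop Edrop.
  have Ec' : run M k (a0 u) (T u) = run M k (a0 u') (T u') := config_ext Es Hhd Htp.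
  have Hrun : forall i, run M k (a0 u) (T u + i) = run M k (a0 u') (T u' + i).
    move=> i; rewrite /run !(addnC _ i) !iterD; congr (iter i _ _); exact: Ec'.
  have Hst := out_det Hrun (Hall (a0 u)) (Hall (a0 u')).
  apply: (@eq_from_nth _ false); first by rewrite !HszG.
  move=> i _; have := Hst (3 * i); by rewrite !stretch0.
rewrite -size_filter -/G.
have Hu : uniq (map psi G) by rewrite map_inj_in_uniq // filter_uniq // uniq_strs.
have Hsub : {subset map psi G <= [seq (q, s) | q <- enum Q, s <- strs (P - m + (n - L))]}.
  move=> y /mapP [u Hu' ->]; apply/allpairsP; exists (psi u); split => //.
    by rewrite mem_enum.
  by rewrite mem_strs size_cat size_map HsizeFr size_drop (HszG u Hu').
have := uniq_leq_size Hu Hsub; rewrite size_map size_allpairs -cardT size_strs => Hle.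
rewrite (_ : P - m + (n - L) = (k + n) - m) in Hle; last by rewrite /P /L /Pp /Lp; rewrite /Lp in Hn; lia.
have HE : 2 ^ (k + n - m) * 2 ^ m = 2 ^ k * 2 ^ n.
  rewrite -!expnD subnK //; rewrite /Lp in Hn; lia.
move: Hle HE Hm; set E := 2 ^ (k + n - m); set X := 2 ^ m; set K := 2 ^ k; set N := 2 ^ n.
have : 0 < X by rewrite expn_gt0.
nia.
Qed.
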